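(* Let $\phi$ be a flow of a compact metric space $X$. If $Sing(\phi)$ is dynamically isolated, then there is $\beta_0>0$ such that $diam(\phi_{\mathbb{R}}(x))\ge\beta_0$ for every $x\in X\setminus Sing(\phi)$.
   Context: A flow is a continuous $\phi:\mathbb{R}\times X\to X$ with $\phi_0=\mathrm{id}$, $\phi_{t+s}=\phi_t\circ\phi_s$; $\phi_{\mathbb{R}}(x)=\{\phi_t(x):t\in\mathbb{R}\}$; $Sing(\phi)$ is the set of fixed points. A compact invariant set $K$ is dynamically isolated if there is a neighborhood $U$ of $K$ with $K=\bigcap_{t\in\mathbb{R}}\phi_t(U)$. *)

(* Defs.v *)
From HB Require Import structures.
From mathcomp Require Import all_boot all_order all_algebra.
From mathcomp Require Import all_classical all_reals all_analysis.
Set Implicit Arguments. Unset Strict Implicit. Unset Printing Implicit Defensive.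
Import Order.TTheory GRing.Theory Num.Theory numFieldTopology.Exports numFieldNormedType.Exports.
Local Open Scope classical_set_scope.
Local Open Scope ring_scope.

Section Flows.
Context {R : realType} {X : metricType R}.

Definition is_flow (phi : R * X -> X) : Prop :=
  continuous phi /\
  (forall x, phi (0, x) = x) /\
  (forall t s x, phi (t + s, x) = phi (t, phi (s, x))).

Definition flow_orbit (phi : R * X -> X) (x : X) : set X :=
  [set phi (t, x) | t in [set: R]].

Definition Sing (phi : R * X -> X) : set X :=
  [set x | forall t, phi (t, x) = x].

Definition flow_img (phi : R * X -> X) (t : R) (U : set X) : set X :=
  [set phi (t, u) | u in U].

Definition dyn_isolated (phi : R * X -> X) (K : set X) : Prop :=
  compact K /\ (forall t, flow_img phi t K = K) /\
  exists U : set X, (exists V : set X, open V /\ K `<=` V /\ V `<=` U) /\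
    K = \bigcap_(t in [set: R]) flow_img phi t U.

Definition diam (A : set X) : R :=
  sup [set mdist x y | x in A & y in A].

End Flows.

(* Main.v *)
Require Import Defs.
From HB Require Import structures.
From mathcomp Require Import all_boot all_order all_algebra.
From mathcomp Require Import all_classical all_reals all_analysis.
From mathcomp Require Import ring.
Import Order.TTheory GRing.Theory Num.Theory numFieldTopology.Exports numFieldNormedType.Exports.
Local Open Scope classical_set_scope.
Local Open Scope ring_scope.

Lemma cluster_dec (R : realType) (X : metricType R) (P : R -> set X) :
  compact [set: X] -> (forall e, 0 < e -> P e !=set0) ->
  (forall e1 e2, 0 < e1 -> e1 <= e2 -> P e1 `<=` P e2) ->
  exists p : X, forall e r, 0 < e -> 0 < r -> exists y, P e y /\ mdist p y < r.
Proof.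
move=> cX Pne Pmon.
pose F := filter_from [set e : R | 0 < e] P.
have FF : Filter F.
  apply: filter_from_filter; first by exists 1; rewrite /= ltr01.
  move=> i j /= i0 j0; exists (Num.min i j); first by rewrite /= lt_min i0 j0.
  have m0 : 0 < Num.min i j by rewrite lt_min i0 j0.
  move=> y Py; split.
    by apply: (Pmon (Num.min i j)) => //; rewrite ge_min lexx.
  by apply: (Pmon (Num.min i j)) => //; rewrite ge_min lexx orbT.
have PF : ProperFilter F by apply: filter_from_proper => // e /Pne.
have [p [_ clp]] := cX F PF (filterT).
exists p => e r e0 r0.
have FPe : F (P e) by exists e.
have [y [Py]] := clp (P e) (ball p r) FPe (@nbhsx_ballx _ _ p r r0).
by rewrite ballEmdist /= => hy; exists y.
Qed.

Lemma mdist_bounded (R : realType) (X : metricType R) (x0 : X) :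
  compact [set: X] -> exists M : R, forall a b : X, mdist a b <= M.
Proof.
move=> cX.
suff [M HM] : exists M : R, forall y : X, mdist x0 y <= M.
  exists (M + M) => a b; apply: (le_trans (metric_triangle a x0 b)).
  by rewrite metric_sym lerD.
case: (pselect (exists M : R, forall y : X, mdist x0 y <= M)) => // H.
have H' : forall M : R, exists y : X, M < mdist x0 y.
  move=> M; apply: contrapT => nM; apply: H; exists M => y.
  rewrite leNgt; apply/negP => hy; apply: nM; by exists y.
have Pmon : forall e1 e2 : R, 0 < e1 -> e1 <= e2 ->
    [set y | e1^-1 < mdist x0 y] `<=` [set y | e2^-1 < mdist x0 y].
  move=> e1 e2 e10 le12 y /= hy; apply: le_lt_trans hy.
  by rewrite lef_pV2 // posrE (lt_le_trans e10 le12).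
have [p Hp] := @cluster_dec R X (fun e => [set y | e^-1 < mdist x0 y]) cX
  (fun e _ => H' e^-1) Pmon.
have q0 : 0 < (mdist x0 p + 1)^-1 by rewrite invr_gt0 ltr_wpDl ?mdist_ge0.
have [y [/= hy1 hy2]] := Hp _ 1 q0 ltr01.
move: hy1; rewrite invrK => hy1.
have T := metric_triangle x0 p y.
have : mdist x0 p + mdist p y < mdist x0 y.
  by apply: lt_trans hy1; rewrite ltrD2l.
by rewrite ltNge T.
Qed.

Lemma le_diam (R : realType) (X : metricType R) (A : set X) (M : R) (a b : X) :
  (forall a b : X, mdist a b <= M) -> A a -> A b -> mdist a b <= diam A.
Proof.
move=> HM Aa Ab; apply: sup_upper_bound; last by exists a => //; exists b.
split; first by exists (mdist a b); exists a => //; exists b.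
by exists M => _ [x Ax [y Ay <-]].
Qed.

Theorem mainTheorem12 (R : realType) (X : metricType R) (phi : R * X -> X) :
  compact [set: X] -> is_flow phi -> dyn_isolated phi (Sing phi) ->
  exists2 beta0 : R, 0 < beta0 &
    forall x : X, ~ Sing phi x -> beta0 <= diam (flow_orbit phi x).
Proof.
move=> cX [phic [phi0 phiD]] [_ [_ [U [[V [oV [KV VU]]] HK]]]].
case: (pselect (exists x0 : X, ~ Sing phi x0)) => [[x0 _]|Hno]; last first.
  by exists 1 => // x nx; exfalso; apply: Hno; exists x.
have [M HM] := @mdist_bounded R X x0 cX.
have orbd : forall x s, mdist x (phi (s, x)) <= diam (flow_orbit phi x).
  move=> x s; apply: (@le_diam R X _ M) => //.
  - by exists 0 => //; rewrite phi0.
  - by exists s.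
case: (pselect (exists2 beta0 : R, 0 < beta0 &
    forall x : X, ~ Sing phi x -> beta0 <= diam (flow_orbit phi x))) => [//|H].
exfalso.
pose P := fun e : R => [set x | ~ Sing phi x /\ diam (flow_orbit phi x) < e].
have Pne : forall e, 0 < e -> P e !=set0.
  move=> e e0; apply: contrapT => nP; apply: H; exists e => // x nx.
  rewrite leNgt; apply/negP => hx; apply: nP; by exists x.
have Pmon : forall e1 e2 : R, 0 < e1 -> e1 <= e2 -> P e1 `<=` P e2.
  by move=> e1 e2 _ le12 y [ny hy]; split => //; apply: lt_le_trans le12.
have [p Hp] := @cluster_dec R X P cX Pne Pmon.
have Sp : Sing phi p.
  move=> t; apply: contrapT => ne.
  pose e := mdist p (phi (t, p)).
  have e0 : 0 < e by rewrite mdist_gt0; apply/eqP => h; apply: ne; rewrite -h.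
  have ct : continuous (fun y => phi (t, y)).
    move=> y.
    have cf : {for y, continuous (fun y : X => (t, y))}.
      have h := @cvg_pair X R X (nbhs y) (nbhs t) (nbhs y) _ _ _
        (fun _ => t) id (cvg_cst _) cvg_id.
      exact: h.
    exact: (continuous_comp cf (phic (t, y))).
  have e30 : 0 < e / 3 by rewrite divr_gt0.
  have Hn : \forall y \near p, mdist (phi (t, p)) (phi (t, y)) < e / 3.
    exact: (metricType_numDomainType.cvgr_dist_lt (ct p) e30).
  have [r /= r0 Hr] := proj1 (@metricType_numDomainType.nbhs_mdistP R X _ _) Hn.
  have m0 : 0 < Num.min r (e / 3) by rewrite lt_min r0 e30.
  have [y [[ny hy] dpy]] := Hp (e / 3) (Num.min r (e / 3)) e30 m0.
  have h1 : mdist p y < e / 3 by apply: (lt_le_trans dpy); rewrite ge_min lexx orbT.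
  have h2 : mdist y (phi (t, y)) < e / 3 := le_lt_trans (orbd y t) hy.
  have h3 : mdist (phi (t, p)) (phi (t, y)) < e / 3.
    by apply: Hr; apply: (lt_le_trans dpy); rewrite ge_min lexx.
  have T1 := metric_triangle p y (phi (t, p)).
  have T2 := metric_triangle y (phi (t, y)) (phi (t, p)).
  rewrite (metric_sym (phi (t, y))) in T2.
  have : e < e.
    apply: (le_lt_trans T1).
    have -> : e = e / 3 + (e / 3 + e / 3) by field.
    rewrite ltrD //; apply: (le_lt_trans T2); exact: ltrD.
  by rewrite ltxx.
have nVp : nbhs p V by apply: open_nbhs_nbhs; split => //; apply: KV.
have [r /= r0 Hr] := proj1 (@metricType_numDomainType.nbhs_mdistP R X _ _) nVp.
have r20 : 0 < r / 2 by rewrite divr_gt0.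
have [y [[ny hy] dpy]] := Hp (r / 2) (r / 2) r20 r20.
apply: ny; rewrite HK => t _.
exists (phi (- t, y)); last by rewrite -phiD subrr phi0.
apply: VU; apply: Hr => /=.
apply: (le_lt_trans (metric_triangle p y _)).
have -> : r = r / 2 + r / 2 by field.
rewrite ltrD //; exact: le_lt_trans (orbd y (- t)) hy.
Qed.
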